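(* For every finitely complete category $\mathbb{E}$, the category $\mathsf{SKB}\mathbb{E}$ of internal left skew braces in $\mathbb{E}$ satisfies (Huq=Smith). In particular, the category $\mathsf{SKB}\,Top$ of topological left skew braces satisfies (Huq=Smith).
   Context: A (left) skew brace is a triple $(A,*,\circ)$ with $(A,* )$ and $(A,\circ)$ groups with common identity such that $a\circ(b*c)=(a\circ b)*a^{-*}*(a\circ c)$ for all $a,b,c$ ($a^{-*}$ the $*$-inverse). An internal skew brace in $\mathbb{E}$ is an object $A$ with two internal group structures with the same unit satisfying this identity (expressed by morphisms in $\mathbb{E}$); morphisms are morphisms of $\mathbb{E}$ that are internal homomorphisms for both. $\mathsf{SKB}\mathbb{E}$ is pointed and protomodular, hence Mal'tsev. In a pointed category, for an equivalence relation $R$ on $X$ with projections $d_0,d_1$, $I_R\rightarrowtail X$ is $d_1\circ\bar x$ where $\bar x\colon I_R\to R$ is the pullback of $d_0$ along $0\to X$. Subobjects $u\colon U\rightarrowtail X$, $v\colon V\rightarrowtail X$ cooperate, $[u,v]=0$, if there is $\varphi\colon U\times V\to X$ with $\varphi\langle 1_U,0\rangle=u$, $\varphi\langle 0,1_V\rangle=v$. For equivalence relations $R,S$ on $X$, $R\times_XS$ is the pullback of $d_1^R$ and $d_0^S$ (triples $xRySz$), with $l_R(xRy)=xRySy$, $r_S(ySz)=yRySz$; $[R,S]=0$ means there is $p\colon R\times_XS\to X$ with $pr_S=d_1^S$ and $pl_R=d_0^R$. (Huq=Smith) means: for every object $X$ and all equivalence relations $R,S$ on $X$, $[I_R,I_S]=0$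 implies $[R,S]=0$. *)

(* Defs.v *)
From Stdlib Require Import ProofIrrelevance.
From mathcomp Require Import all_boot all_classical topology.

Set Implicit Arguments.
Unset Strict Implicit.
Unset Printing Implicit Defensive.

Record Category := {
  Obj :> Type;
  Hom : Obj -> Obj -> Type;
  idm : forall A : Obj, Hom A A;
  comp : forall A B C : Obj, Hom B C -> Hom A B -> Hom A C;
  comp_assoc : forall (A B C D : Obj) (h : Hom C D) (g : Hom B C) (f : Hom A B),
      comp h (comp g f) = comp (comp h g) f;
  comp_idl : forall (A B : Obj) (f : Hom A B), comp (idm B) f = f;
  comp_idr : forall (A B : Obj) (f : Hom A B), comp f (idm A) = f }.

Arguments Hom {c} _ _.
Arguments idm {c} A.
Arguments comp {c A B C} _ _.

Declare Scope cat_scope.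
Notation "g <o f" := (comp g f) (at level 40, left associativity) : cat_scope.
Open Scope cat_scope.

Record Terminal (C : Category) := {
  term :> Obj C;
  bang : forall X : Obj C, Hom X term;
  bang_uniq : forall (X : Obj C) (f : Hom X term), f = bang X }.

Record BinProduct (C : Category) (A B : Obj C) := {
  prod_obj :> Obj C;
  pr1 : Hom prod_obj A;
  pr2 : Hom prod_obj B;
  pairing : forall X : Obj C, Hom X A -> Hom X B -> Hom X prod_obj;
  pr1_pair : forall (X : Obj C) (f : Hom X A) (g : Hom X B), pr1 <o pairing f g = f;
  pr2_pair : forall (X : Obj C) (f : Hom X A) (g : Hom X B), pr2 <o pairing f g = g;
  pair_uniq : forall (X : Obj C) (f : Hom X A) (g : Hom X B) (h : Hom X prod_obj),
      pr1 <o h = f -> pr2 <o h = g -> h = pairing f g }.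

Record Pullback (C : Category) (A B D : Obj C) (f : Hom A D) (g : Hom B D) := {
  pb_obj :> Obj C;
  pb1 : Hom pb_obj A;
  pb2 : Hom pb_obj B;
  pb_comm : f <o pb1 = g <o pb2;
  pb_pair : forall (X : Obj C) (a : Hom X A) (b : Hom X B),
      f <o a = g <o b -> Hom X pb_obj;
  pb1_pair : forall (X : Obj C) (a : Hom X A) (b : Hom X B) (e : f <o a = g <o b),
      pb1 <o pb_pair e = a;
  pb2_pair : forall (X : Obj C) (a : Hom X A) (b : Hom X B) (e : f <o a = g <o b),
      pb2 <o pb_pair e = b;
  pb_uniq : forall (X : Obj C) (a : Hom X A) (b : Hom X B) (e : f <o a = g <o b)
      (h : Hom X pb_obj),
      pb1 <o h = a -> pb2 <o h = b -> h = pb_pair e }.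

Record FinLim (C : Category) := {
  fl_term : Terminal C;
  fl_prod : forall A B : Obj C, BinProduct A B;
  fl_pb : forall (A B D : Obj C) (f : Hom A D) (g : Hom B D), Pullback f g }.

Section SKB.
Variables (E : Category) (FL : FinLim E).

Definition one : Obj E := fl_term FL.
Definition sq (A : Obj E) : Obj E := fl_prod FL A A.
Definition pr (W A : Obj E) (x y : Hom W A) : Hom W (sq A) :=
  pairing (fl_prod FL A A) x y.
Definition cst (W A : Obj E) (e : Hom one A) : Hom W A :=
  e <o bang (fl_term FL) W.

(** Internal group (m, e, i) on A; the axioms are the usual commutative
    diagrams, stated equivalently (Yoneda) on all generalized elements. *)
Definition IsInternalGroup (A : Obj E) (m : Hom (sq A) A) (e : Hom one A)
    (i : Hom A A) : Prop :=
  (forall W (x y z : Hom W A),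
      m <o pr (m <o pr x y) z = m <o pr x (m <o pr y z)) /\
  (forall W (x : Hom W A), m <o pr (cst W e) x = x) /\
  (forall W (x : Hom W A), m <o pr x (cst W e) = x) /\
  (forall W (x : Hom W A), m <o pr (i <o x) x = cst W e) /\
  (forall W (x : Hom W A), m <o pr x (i <o x) = cst W e).

Record SkewBrace := {
  sb_car :> Obj E;
  sb_star : Hom (sq sb_car) sb_car;
  sb_circ : Hom (sq sb_car) sb_car;
  sb_unit : Hom one sb_car;
  sb_inv_star : Hom sb_car sb_car;
  sb_inv_circ : Hom sb_car sb_car;
  sb_star_grp : IsInternalGroup sb_star sb_unit sb_inv_star;
  sb_circ_grp : IsInternalGroup sb_circ sb_unit sb_inv_circ;
  sb_brace : forall W (a b c : Hom W sb_car),
      sb_circ <o pr a (sb_star <o pr b c)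
      = sb_star <o pr (sb_star <o pr (sb_circ <o pr a b) (sb_inv_star <o a))
                      (sb_circ <o pr a c) }.

Definition IsSKBMorph (X Y : SkewBrace) (f : Hom (sb_car X) (sb_car Y)) : Prop :=
  (forall W (x y : Hom W X),
      f <o (sb_star X <o pr x y) = sb_star Y <o pr (f <o x) (f <o y)) /\
  (forall W (x y : Hom W X),
      f <o (sb_circ X <o pr x y) = sb_circ Y <o pr (f <o x) (f <o y)).

Definition SKBHom (X Y : SkewBrace) := {f : Hom (sb_car X) (sb_car Y) | IsSKBMorph f}.

Lemma SKB_id_morph (X : SkewBrace) : IsSKBMorph (idm (sb_car X)).
Proof.
split=> W x y; rewrite !comp_idl //.
Qed.

Lemma SKB_comp_morph (X Y Z : SkewBrace) (g : SKBHom Y Z) (f : SKBHom X Y) :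
  IsSKBMorph (proj1_sig g <o proj1_sig f).
Proof.
case: g => g [g1 g2]; case: f => f [f1 f2] /=.
split=> W x y; rewrite -comp_assoc ?f1 ?f2 ?g1 ?g2 !comp_assoc //.
Qed.

Definition SKB_idm (X : SkewBrace) : SKBHom X X := exist _ _ (SKB_id_morph X).
Definition SKB_comp (X Y Z : SkewBrace) (g : SKBHom Y Z) (f : SKBHom X Y) :
  SKBHom X Z := exist _ _ (@SKB_comp_morph X Y Z g f).

Lemma SKBHom_eq (X Y : SkewBrace) (f g : SKBHom X Y) :
  proj1_sig f = proj1_sig g -> f = g.
Proof.
case: f => f pf; case: g => g pg /= e; subst g; f_equal; apply: proof_irrelevance.
Qed.

Lemma SKB_assoc (A B C D : SkewBrace) (h : SKBHom C D) (g : SKBHom B C)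
  (f : SKBHom A B) : SKB_comp h (SKB_comp g f) = SKB_comp (SKB_comp h g) f.
Proof. apply: SKBHom_eq; exact: comp_assoc. Qed.

Lemma SKB_idl (A B : SkewBrace) (f : SKBHom A B) : SKB_comp (SKB_idm B) f = f.
Proof. apply: SKBHom_eq; exact: comp_idl. Qed.

Lemma SKB_idr (A B : SkewBrace) (f : SKBHom A B) : SKB_comp f (SKB_idm A) = f.
Proof. apply: SKBHom_eq; exact: comp_idr. Qed.

Definition SKBCat : Category :=
  {| Obj := SkewBrace; Hom := SKBHom; idm := SKB_idm; comp := SKB_comp;
     comp_assoc := SKB_assoc; comp_idl := SKB_idl; comp_idr := SKB_idr |}.

End SKB.

Section Pointed.
Variable C : Category.

Definition IsZeroObj (Z : Obj C) : Prop :=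
  forall X : Obj C,
    (exists f : Hom Z X, forall g : Hom Z X, g = f) /\
    (exists f : Hom X Z, forall g : Hom X Z, g = f).

Definition IsZeroMor (Z : Obj C) (X Y : Obj C) (h : Hom X Y) : Prop :=
  exists (a : Hom X Z) (b : Hom Z Y), h = b <o a.

Definition IsPullbackSq (A B D P : Obj C) (f : Hom A D) (g : Hom B D)
    (p1 : Hom P A) (p2 : Hom P B) : Prop :=
  f <o p1 = g <o p2 /\
  forall (W : Obj C) (a : Hom W A) (b : Hom W B), f <o a = g <o b ->
    exists! h : Hom W P, p1 <o h = a /\ p2 <o h = b.

Definition IsProductDiag (A B P : Obj C) (p1 : Hom P A) (p2 : Hom P B) : Prop :=
  forall (W : Obj C) (a : Hom W A) (b : Hom W B),
    exists! h : Hom W P, p1 <o h = a /\ p2 <o h = b.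

(** (R, d0, d1) is an (internal) equivalence relation on X: d0, d1 jointly
    monic, reflexive, symmetric, transitive (transitivity stated on
    generalized elements, i.e. for every pair composable through the
    pullback R x_X R). *)
Definition IsEquivRel (X R : Obj C) (d0 d1 : Hom R X) : Prop :=
  (forall (W : Obj C) (a b : Hom W R), d0 <o a = d0 <o b -> d1 <o a = d1 <o b -> a = b) /\
  (exists r : Hom X R, d0 <o r = idm X /\ d1 <o r = idm X) /\
  (exists s : Hom R R, d0 <o s = d1 /\ d1 <o s = d0) /\
  (forall (W : Obj C) (a b : Hom W R), d1 <o a = d0 <o b ->
     exists c : Hom W R, d0 <o c = d0 <o a /\ d1 <o c = d1 <o b).

(** Huq commutation [u, v] = 0 of u : U -> X and v : V -> X:
    there is phi : U x V -> X with phi <1,0> = u and phi <0,1> = v. *)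
Definition Cooperate (Z : Obj C) (X U V : Obj C) (u : Hom U X) (v : Hom V X) : Prop :=
  exists (P : Obj C) (p1 : Hom P U) (p2 : Hom P V),
    IsProductDiag p1 p2 /\
    exists phi : Hom P X,
      (forall l : Hom U P, p1 <o l = idm U -> IsZeroMor Z (p2 <o l) -> phi <o l = u) /\
      (forall k : Hom V P, IsZeroMor Z (p1 <o k) -> p2 <o k = idm V -> phi <o k = v).

(** Smith commutation [R, S] = 0: on R x_X S (pullback of d1^R and d0^S,
    with projections a, b) there is p with p r_S = d1^S and p l_R = d0^R,
    where l_R(xRy) = (xRy, ySy) and r_S(ySz) = (yRy, ySz). *)
Definition SmithTrivial (X R S : Obj C) (d0R d1R : Hom R X) (d0S d1S : Hom S X) : Prop :=
  forall (P : Obj C) (a : Hom P R) (b : Hom P S), IsPullbackSq d1R d0S a b ->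
    exists p : Hom P X,
      (forall r : Hom S P, b <o r = idm S -> d0R <o (a <o r) = d0S ->
          d1R <o (a <o r) = d0S -> p <o r = d1S) /\
      (forall l : Hom R P, a <o l = idm R -> d0S <o (b <o l) = d1R ->
          d1S <o (b <o l) = d1R -> p <o l = d0R).

(** (Huq=Smith) relative to the zero object Z: for every X and equivalence
    relations R, S on X, [I_R, I_S] = 0 implies [R, S] = 0, where
    I_R -> X is d1^R o xbar with xbar : I_R -> R the pullback of d0^R along
    the morphism Z -> X. *)
Definition HuqSmith (Z : Obj C) : Prop :=
  forall (X R S : Obj C) (d0R d1R : Hom R X) (d0S d1S : Hom S X),
    IsEquivRel d0R d1R -> IsEquivRel d0S d1S ->
    forall (zX : Hom Z X)
      (IR : Obj C) (xR : Hom IR R) (zR : Hom IR Z), IsPullbackSq d0R zX xR zR ->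
    forall (IS : Obj C) (xS : Hom IS S) (zS : Hom IS Z), IsPullbackSq d0S zX xS zS ->
    Cooperate Z (d1R <o xR) (d1S <o xS) ->
    SmithTrivial d0R d1R d0S d1S.

Definition SatisfiesHuqSmith : Prop :=
  (exists Z : Obj C, IsZeroObj Z) /\
  forall Z : Obj C, IsZeroObj Z -> HuqSmith Z.

End Pointed.

Definition TopHom (X Y : topologicalType) := {f : X -> Y | continuous f}.

Lemma Top_id_cont (X : topologicalType) : continuous (@id X).
Proof. by move=> x. Qed.

Lemma Top_comp_cont (X Y Z : topologicalType) (g : TopHom Y Z) (f : TopHom X Y) :
  continuous (proj1_sig g \o proj1_sig f).
Proof.
case: g => g cg; case: f => f cf /= x; exact: continuous_comp (cf x) (cg (f x)).
Qed.

Definition Top_idm (X : topologicalType) : TopHom X X := exist _ _ (@Top_id_cont X).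
Definition Top_comp (X Y Z : topologicalType) (g : TopHom Y Z) (f : TopHom X Y) :
  TopHom X Z := exist _ _ (@Top_comp_cont X Y Z g f).

Lemma TopHom_eq (X Y : topologicalType) (f g : TopHom X Y) :
  proj1_sig f = proj1_sig g -> f = g.
Proof.
case: f => f pf; case: g => g pg /= e; subst g; f_equal; apply: proof_irrelevance.
Qed.

Lemma Top_assoc (A B C D : topologicalType) (h : TopHom C D) (g : TopHom B C)
  (f : TopHom A B) : Top_comp h (Top_comp g f) = Top_comp (Top_comp h g) f.
Proof. exact: TopHom_eq. Qed.

Lemma Top_idl (A B : topologicalType) (f : TopHom A B) : Top_comp (Top_idm B) f = f.
Proof. exact: TopHom_eq. Qed.

Lemma Top_idr (A B : topologicalType) (f : TopHom A B) : Top_comp f (Top_idm A) = f.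
Proof. exact: TopHom_eq. Qed.

Definition TopCat : Category :=
  {| Obj := topologicalType; Hom := TopHom; idm := Top_idm; comp := Top_comp;
     comp_assoc := Top_assoc; comp_idl := Top_idl; comp_idr := Top_idr |}.

(* Main.v *)
Require Import Defs.
From mathcomp Require Import all_boot all_classical topology.
Set Implicit Arguments.
Unset Strict Implicit.
Unset Printing Implicit Defensive.

Section Gen.
Variables (E : Category) (FL : FinLim E).

Local Notation mu m x y := (m <o pr FL x y).
Implicit Types (W : E).

Lemma pr1_pr W A (x y : Hom W A) : pr1 (fl_prod FL A A) <o pr FL x y = x.
Proof. exact: pr1_pair. Qed.
Lemma pr2_pr W A (x y : Hom W A) : pr2 (fl_prod FL A A) <o pr FL x y = y.
Proof. exact: pr2_pair. Qed.

Lemma pr_comp W W' A (x y : Hom W A) (f : Hom W' W) :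
  pr FL x y <o f = pr FL (x <o f) (y <o f).
Proof.
rewrite /pr; apply: pair_uniq; rewrite comp_assoc ?pr1_pair ?pr2_pair //.
Qed.

Lemma pr_eta W A (h : Hom W (sq FL A)) :
  h = pr FL (pr1 (fl_prod FL A A) <o h) (pr2 (fl_prod FL A A) <o h).
Proof. by apply: pair_uniq. Qed.

Lemma bang_comp W (W' : E) (f : Hom W' W) : bang (fl_term FL) W <o f = bang (fl_term FL) W'.
Proof. exact: bang_uniq. Qed.

Lemma cst_comp W (W' : E) A (e : Hom (Defs.one FL) A) (f : Hom W' W) : Defs.cst W e <o f = Defs.cst W' e.
Proof. by rewrite /Defs.cst -comp_assoc bang_comp. Qed.

Lemma comp_cst W A B (e : Hom (Defs.one FL) A) (f : Hom A B) : f <o Defs.cst W e = Defs.cst W (f <o e).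
Proof. by rewrite /Defs.cst comp_assoc. Qed.

Lemma cst_one A (e : Hom (Defs.one FL) A) : Defs.cst (Defs.one FL) e = e.
Proof.
rewrite /Defs.cst; have -> : bang (fl_term FL) (Defs.one FL) = idm _ by symmetry; apply: bang_uniq.
exact: comp_idr.
Qed.

Lemma mu_comp W W' A B (m : Hom (sq FL A) B) (x y : Hom W A) (f : Hom W' W) :
  mu m x y <o f = mu m (x <o f) (y <o f).
Proof. by rewrite -comp_assoc pr_comp. Qed.

Lemma to_one W (x y : Hom W (Defs.one FL)) : x = y.
Proof. by rewrite (bang_uniq x) (bang_uniq y). Qed.

Section Grp.
Variables (A : E) (m : Hom (sq FL A) A) (e : Hom (Defs.one FL) A) (i : Hom A A).
Hypothesis H : IsInternalGroup m e i.

Lemma gA W (x y z : Hom W A) : mu m (mu m x y) z = mu m x (mu m y z).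
Proof. by case: H. Qed.
Lemma g1x W (x : Hom W A) : mu m (Defs.cst W e) x = x.
Proof. by case: H => _ []. Qed.
Lemma gx1 W (x : Hom W A) : mu m x (Defs.cst W e) = x.
Proof. by case: H => _ [] _ []. Qed.
Lemma gVx W (x : Hom W A) : mu m (i <o x) x = Defs.cst W e.
Proof. by case: H => _ [] _ [] _ []. Qed.
Lemma gxV W (x : Hom W A) : mu m x (i <o x) = Defs.cst W e.
Proof. by case: H => _ [] _ [] _ []. Qed.

Lemma gKV W (x y : Hom W A) : mu m (i <o x) (mu m x y) = y.
Proof. by rewrite -gA gVx g1x. Qed.
Lemma gK W (x y : Hom W A) : mu m x (mu m (i <o x) y) = y.
Proof. by rewrite -gA gxV g1x. Qed.
Lemma gKr W (x y : Hom W A) : mu m (mu m y x) (i <o x) = y.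
Proof. by rewrite gA gxV gx1. Qed.
Lemma gKVr W (x y : Hom W A) : mu m (mu m y (i <o x)) x = y.
Proof. by rewrite gA gVx gx1. Qed.

Lemma gcanl W (x y z : Hom W A) : mu m x y = mu m x z -> y = z.
Proof. by move=> h; rewrite -(gKV x y) h gKV. Qed.
Lemma gcanr W (x y z : Hom W A) : mu m y x = mu m z x -> y = z.
Proof. by move=> h; rewrite -(gKr x y) h gKr. Qed.

Lemma ginv_uniq W (x y : Hom W A) : mu m x y = Defs.cst W e -> y = i <o x.
Proof. by move=> h; apply: (@gcanl _ x); rewrite h gxV. Qed.
Lemma ginvK W (x : Hom W A) : i <o (i <o x) = x.
Proof. by symmetry; apply: ginv_uniq; rewrite gVx. Qed.
Lemma ginvM W (x y : Hom W A) : i <o mu m x y = mu m (i <o y) (i <o x).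
Proof.
by symmetry; apply: ginv_uniq; rewrite gA -(gA y) gxV g1x gxV.
Qed.
Lemma ginv1 W : i <o Defs.cst W e = Defs.cst W e.
Proof. by symmetry; apply: ginv_uniq; rewrite g1x. Qed.
Lemma gidem W (x : Hom W A) : mu m x x = x -> x = Defs.cst W e.
Proof. by move=> h; apply: (@gcanl _ x); rewrite h gx1. Qed.
End Grp.

Section Hom.
Variables (A B : E) (m : Hom (sq FL A) A) (e : Hom (Defs.one FL) A) (i : Hom A A)
  (m' : Hom (sq FL B) B) (e' : Hom (Defs.one FL) B) (i' : Hom B B).
Hypotheses (H : IsInternalGroup m e i) (H' : IsInternalGroup m' e' i').
Variable h : Hom A B.
Hypothesis hm : forall W (x y : Hom W A), h <o mu m x y = mu m' (h <o x) (h <o y).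

Lemma hom1 W : h <o Defs.cst W e = Defs.cst W e'.
Proof.
apply: (gidem H'); rewrite -hm.
by rewrite (g1x H).
Qed.
Lemma homV W (x : Hom W A) : h <o (i <o x) = i' <o (h <o x).
Proof.
apply: (ginv_uniq H'); rewrite -hm (gxV H) hom1 //.
Qed.
End Hom.


Definition sop (X : SkewBrace FL) (b : bool) : Hom (sq FL X) X :=
  if b then sb_star X else sb_circ X.
Definition sinv (X : SkewBrace FL) (b : bool) : Hom X X :=
  if b then sb_inv_star X else sb_inv_circ X.
Lemma sgrp (X : SkewBrace FL) b : IsInternalGroup (sop X b) (sb_unit X) (sinv X b).
Proof. case: b; [exact: sb_star_grp | exact: sb_circ_grp]. Qed.

Local Notation "` f" := (proj1_sig f) (at level 2).

Lemma smorph (X Y : SkewBrace FL) (f : SKBHom X Y) b W (x y : Hom W X) :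
  `f <o mu (sop X b) x y = mu (sop Y b) (`f <o x) (`f <o y).
Proof. case: f => f [h1 h2]; case: b; [exact: h1 | exact: h2]. Qed.

Lemma smorph1 (X Y : SkewBrace FL) (f : SKBHom X Y) W :
  `f <o Defs.cst W (sb_unit X) = Defs.cst W (sb_unit Y).
Proof. exact: (hom1 (sgrp X true) (sgrp Y true) (smorph f true)). Qed.

Lemma smorph1' (X Y : SkewBrace FL) (f : SKBHom X Y) :
  `f <o sb_unit X = sb_unit Y.
Proof. by have := smorph1 f (Defs.one FL); rewrite !cst_one. Qed.

Lemma smorphV (X Y : SkewBrace FL) (f : SKBHom X Y) b W (x : Hom W X) :
  `f <o (sinv X b <o x) = sinv Y b <o (`f <o x).
Proof. exact: (homV (sgrp X b) (sgrp Y b) (smorph f b)). Qed.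

Definition T0grp : IsInternalGroup (bang (fl_term FL) (sq FL (Defs.one FL)))
   (idm (Defs.one FL)) (idm (Defs.one FL)).
Proof. by do ![split] => *; apply: to_one. Qed.

Definition T0 : SkewBrace FL :=
  {| sb_car := Defs.one FL; sb_star := bang _ _; sb_circ := bang _ _;
     sb_unit := idm _; sb_inv_star := idm _; sb_inv_circ := idm _;
     sb_star_grp := T0grp; sb_circ_grp := T0grp;
     sb_brace := fun W a b c => to_one _ _ |}.

Lemma T0_from_morph (X : SkewBrace FL) : IsSKBMorph (X:=T0) (Y:=X) (sb_unit X).
Proof.
have key : forall b W (x y : Hom W (Defs.one FL)),
    sb_unit X <o (sop T0 b <o pr FL x y) = mu (sop X b) (sb_unit X <o x) (sb_unit X <o y).
  move=> b W x y.
  rewrite (to_one x (bang (fl_term FL) W)) (to_one y (bang (fl_term FL) W)).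
  rewrite (to_one (sop T0 b <o _) (bang (fl_term FL) W)).
  by rewrite -[sb_unit X <o _]/(Defs.cst W (sb_unit X)) (g1x (sgrp X b)).
by split; [exact: (key true) | exact: (key false)].
Qed.

Definition T0_from (X : SkewBrace FL) : SKBHom T0 X := exist _ _ (T0_from_morph X).

Lemma T0_from_uniq (X : SkewBrace FL) (g : SKBHom T0 X) : `g = sb_unit X.
Proof.
have := smorph1 g (Defs.one FL).
rewrite !cst_one => <-; rewrite comp_idr //.
Qed.

Lemma T0_to_morph (X : SkewBrace FL) : IsSKBMorph (X:=X) (Y:=T0) (bang _ (sb_car X)).
Proof. by split=> *; apply: to_one. Qed.

Definition T0_to (X : SkewBrace FL) : SKBHom X T0 := exist _ _ (T0_to_morph X).

Lemma T0_zero : IsZeroObj (C:=SKBCat FL) T0.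
Proof.
move=> X; split.
  exists (T0_from X) => g; apply: SKBHom_eq; exact: T0_from_uniq.
exists (T0_to X) => g; apply: SKBHom_eq; exact: to_one.
Qed.

End Gen.

Section PB.
Variables (E : Category) (FL : FinLim E).
Local Notation mu m x y := (m <o pr FL x y).
Local Notation "` f" := (proj1_sig f) (at level 2).
Implicit Types (W : E).

Variables (X Y D : SkewBrace FL) (f : SKBHom X D) (g : SKBHom Y D).
Let PB := fl_pb FL (`f) (`g).
Let p1 : Hom (PB : E) X := pb1 PB.
Let p2 : Hom (PB : E) Y := pb2 PB.
Let q1 := pr1 (fl_prod FL PB PB).
Let q2 := pr2 (fl_prod FL PB PB).

Lemma pcomm : `f <o p1 = `g <o p2.
Proof. exact: pb_comm. Qed.

Lemma pcomm' W (h : Hom W PB) : `f <o (p1 <o h) = `g <o (p2 <o h).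
Proof. by rewrite !comp_assoc pcomm. Qed.

Lemma pop_eq b : `f <o mu (sop X b) (p1 <o q1) (p1 <o q2) = `g <o mu (sop Y b) (p2 <o q1) (p2 <o q2).
Proof. by rewrite !smorph !pcomm'. Qed.

Definition pop b : Hom (sq FL PB) PB := pb_pair PB (pop_eq b).

Lemma punit_eq : `f <o sb_unit X = `g <o sb_unit Y.
Proof. by rewrite !smorph1'. Qed.
Definition punit : Hom (Defs.one FL) PB := pb_pair PB punit_eq.

Lemma pinv_eq b : `f <o (sinv X b <o p1) = `g <o (sinv Y b <o p2).
Proof. by rewrite !smorphV pcomm. Qed.
Definition pinv b : Hom PB PB := pb_pair PB (pinv_eq b).

Lemma pc1 b W (x y : Hom W PB) : p1 <o mu (pop b) x y = mu (sop X b) (p1 <o x) (p1 <o y).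
Proof.
rewrite comp_assoc /pop pb1_pair mu_comp -!comp_assoc /q1 /q2 pr1_pr pr2_pr //.
Qed.
Lemma pc2 b W (x y : Hom W PB) : p2 <o mu (pop b) x y = mu (sop Y b) (p2 <o x) (p2 <o y).
Proof.
rewrite comp_assoc /pop pb2_pair mu_comp -!comp_assoc /q1 /q2 pr1_pr pr2_pr //.
Qed.
Lemma pu1 W : p1 <o Defs.cst W punit = Defs.cst W (sb_unit X).
Proof. by rewrite comp_cst /punit pb1_pair. Qed.
Lemma pu2 W : p2 <o Defs.cst W punit = Defs.cst W (sb_unit Y).
Proof. by rewrite comp_cst /punit pb2_pair. Qed.
Lemma pi1 b W (x : Hom W PB) : p1 <o (pinv b <o x) = sinv X b <o (p1 <o x).
Proof. by rewrite comp_assoc /pinv pb1_pair -comp_assoc. Qed.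
Lemma pi2 b W (x : Hom W PB) : p2 <o (pinv b <o x) = sinv Y b <o (p2 <o x).
Proof. by rewrite comp_assoc /pinv pb2_pair -comp_assoc. Qed.

Lemma pjm W (h1 h2 : Hom W PB) : p1 <o h1 = p1 <o h2 -> p2 <o h1 = p2 <o h2 -> h1 = h2.
Proof.
move=> e1 e2.
rewrite (pb_uniq (pcomm' h1) (h:=h1)) // (pb_uniq (pcomm' h1) (h:=h2)) //.
Qed.

Ltac pcomp := apply: pjm; rewrite ?pc1 ?pc2 ?pu1 ?pu2 ?pi1 ?pi2.

Lemma pgrp b : IsInternalGroup (pop b) punit (pinv b).
Proof.
split; [|split; [|split; [|split]]] => W x *; pcomp.
all: first [ exact: (gA (sgrp _ _)) | exact: (g1x (sgrp _ _)) | exact: (gx1 (sgrp _ _))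
           | exact: (gVx (sgrp _ _)) | exact: (gxV (sgrp _ _)) ].
Qed.

Lemma pbrace W (a b c : Hom W PB) :
  mu (pop false) a (mu (pop true) b c)
  = mu (pop true) (mu (pop true) (mu (pop false) a b) (pinv true <o a)) (mu (pop false) a c).
Proof. pcomp; exact: sb_brace. Qed.

Definition PBb : SkewBrace FL :=
  {| sb_car := PB; sb_star := pop true; sb_circ := pop false; sb_unit := punit;
     sb_inv_star := pinv true; sb_inv_circ := pinv false;
     sb_star_grp := pgrp true; sb_circ_grp := pgrp false; sb_brace := pbrace |}.

Lemma sop_PBb b : sop PBb b = pop b.
Proof. by case: b. Qed.

Lemma P1m : IsSKBMorph (X:=PBb) (Y:=X) p1.
Proof. split=> W x y; [exact: (pc1 true) | exact: (pc1 false)]. Qed.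
Lemma P2m : IsSKBMorph (X:=PBb) (Y:=Y) p2.
Proof. split=> W x y; [exact: (pc2 true) | exact: (pc2 false)]. Qed.
Definition P1 : SKBHom PBb X := exist _ _ P1m.
Definition P2 : SKBHom PBb Y := exist _ _ P2m.

Lemma P_comm : SKB_comp f P1 = SKB_comp g P2.
Proof. apply: SKBHom_eq; exact: pcomm. Qed.

Lemma Ppair_m (V : SkewBrace FL) (a : SKBHom V X) (b : SKBHom V Y)
  (h : `f <o `a = `g <o `b) : IsSKBMorph (X:=V) (Y:=PBb) (pb_pair PB h).
Proof.
have key : forall c W (x y : Hom W V),
  pb_pair PB h <o mu (sop V c) x y = mu (pop c) (pb_pair PB h <o x) (pb_pair PB h <o y).
  have E1 : forall W (z : Hom W V), p1 <o (pb_pair PB h <o z) = `a <o z.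
    by move=> W z; rewrite comp_assoc pb1_pair.
  have E2 : forall W (z : Hom W V), p2 <o (pb_pair PB h <o z) = `b <o z.
    by move=> W z; rewrite comp_assoc pb2_pair.
  move=> c W x y; pcomp; rewrite ?E1 ?E2 smorph //.
split=> W x y; [exact: (key true) | exact: (key false)].
Qed.

End PB.

Section Main.
Variables (E : Category) (FL : FinLim E).
Local Notation mu m x y := (m <o pr FL x y).
Local Notation "` f" := (proj1_sig f) (at level 2).
Implicit Types (W : E).

Lemma und (X Y : SkewBrace FL) (f g : SKBHom X Y) : f = g -> `f = `g.
Proof. by move->. Qed.

Lemma zero_elem (Z : SkewBrace FL) : IsZeroObj (C:=SKBCat FL) Z ->
  forall W (z : Hom W Z), z = Defs.cst W (sb_unit Z).
Proof.
move=> HZ W z.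
case: (HZ (T0 FL)) => [[u _] [v _]].
case: (HZ Z) => [[e0 He0] _].
have evu : `v <o `u = idm (Z : E).
  have := und (etrans (He0 (SKB_comp v u)) (esym (He0 (SKB_idm Z)))).
  by [].
rewrite -[z]comp_idl -evu -comp_assoc (T0_from_uniq v).
by rewrite (to_one (`u <o z) (bang (fl_term FL) W)).
Qed.

Lemma pb_fact (A B D I : SkewBrace FL) (f : SKBHom A D) (g : SKBHom B D)
  (x : SKBHom I A) (y : SKBHom I B) :
  IsPullbackSq (C:=SKBCat FL) f g x y ->
  forall W (t : Hom W A) (s : Hom W B), `f <o t = `g <o s ->
  exists i : Hom W I, `x <o i = t.
Proof.
case=> _ /(_ (PBb f g) (P1 f g) (P2 f g) (P_comm f g)) [th [[t1 t2] _]] W t s e.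
exists (`th <o pb_pair (fl_pb FL (`f) (`g)) e).
rewrite comp_assoc.
have -> : `x <o `th = pb1 (fl_pb FL (`f) (`g)) by exact: (und t1).
exact: pb1_pair.
Qed.

Lemma prod_jm (U V P : SkewBrace FL) (p1 : SKBHom P U) (p2 : SKBHom P V) :
  IsProductDiag (C:=SKBCat FL) p1 p2 ->
  forall W (h1 h2 : Hom W P), `p1 <o h1 = `p1 <o h2 -> `p2 <o h1 = `p2 <o h2 -> h1 = h2.
Proof.
move=> HP W h1 h2 e1 e2.
have ec : ` (T0_to U) <o `p1 = ` (T0_to V) <o `p2 := to_one _ _.
pose th' : SKBHom P (PBb (T0_to U) (T0_to V)) := exist _ _ (Ppair_m ec).
case: (HP _ (P1 (T0_to U) (T0_to V)) (P2 (T0_to U) (T0_to V))) => th [[t1 t2] _].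
case: (HP _ p1 p2) => h0 [_ uq].
have eid : SKB_comp th th' = SKB_idm P.
  rewrite -(uq (SKB_comp th th')); last first.
    split; apply: SKBHom_eq => /=; rewrite comp_assoc.
      have t1' : `p1 <o `th = pb1 (fl_pb FL (bang (fl_term FL) U) (bang (fl_term FL) V)) := und t1.
      by rewrite t1' pb1_pair.
    have t2' : `p2 <o `th = pb2 (fl_pb FL (bang (fl_term FL) U) (bang (fl_term FL) V)) := und t2.
    by rewrite t2' pb2_pair.
  apply: uq; split; apply: SKBHom_eq => /=; exact: comp_idr.
have eidE : `th <o `th' = idm (P : E) by exact: (und eid).
have : `th' <o h1 = `th' <o h2.
  apply: pjm; rewrite !comp_assoc /= ?pb1_pair ?pb2_pair //.
move=> eh; rewrite -[h1]comp_idl -[h2]comp_idl -eidE -!comp_assoc eh //.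
Qed.


Lemma gswap A (m : Hom (sq FL A) A) e i (H : IsInternalGroup m e i) W
  (x0 x1 x2 y0 y1 y2 : Hom W A) :
  mu m (mu m y0 (i <o y1)) (mu m (i <o x1) x2) = mu m (mu m (i <o x1) x2) (mu m y0 (i <o y1)) ->
  mu m (mu m (mu m x0 y0) (i <o mu m x1 y1)) (mu m x2 y2)
  = mu m (mu m (mu m x0 (i <o x1)) x2) (mu m (mu m y0 (i <o y1)) y2).
Proof.
move=> c; rewrite (ginvM H).
transitivity (mu m (mu m x0 (mu m (mu m y0 (i <o y1)) (mu m (i <o x1) x2))) y2).
  by rewrite !(gA H).
by rewrite c !(gA H).
Qed.

Definition inI (X R : SkewBrace FL) (d0 d1 : SKBHom R X) W (u : Hom W X) : Prop :=
  exists t : Hom W R, `d0 <o t = Defs.cst W (sb_unit X) /\ `d1 <o t = u.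

Section Rel.
Variables (X R : SkewBrace FL) (d0 d1 : SKBHom R X) (rho : SKBHom X R) (sg : SKBHom R R).
Hypotheses (hr0 : `d0 <o `rho = idm (X : E)) (hr1 : `d1 <o `rho = idm (X : E))
  (hs0 : `d0 <o `sg = `d1) (hs1 : `d1 <o `sg = `d0).

Let r0' W (z : Hom W X) : `d0 <o (`rho <o z) = z.
Proof. by rewrite comp_assoc hr0 comp_idl. Qed.
Let r1' W (z : Hom W X) : `d1 <o (`rho <o z) = z.
Proof. by rewrite comp_assoc hr1 comp_idl. Qed.

Lemma M1 b W (t : Hom W R) :
  inI d0 d1 (mu (sop X b) (`d0 <o t) (sinv X b <o (`d1 <o t))).
Proof.
exists (`sg <o mu (sop R b) t (sinv R b <o (`rho <o (`d1 <o t)))); split.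
  rewrite comp_assoc hs0 smorph smorphV r1'.
  exact: (gxV (sgrp X b)).
by rewrite comp_assoc hs1 smorph smorphV r0'.
Qed.

Lemma M2 b W (t : Hom W R) :
  inI d0 d1 (mu (sop X b) (sinv X b <o (`d0 <o t)) (`d1 <o t)).
Proof.
exists (mu (sop R b) (sinv R b <o (`rho <o (`d0 <o t))) t); split.
  rewrite smorph smorphV r0'.
  exact: (gVx (sgrp X b)).
by rewrite smorph smorphV r1'.
Qed.
End Rel.

Lemma equiv_facts (X R : SkewBrace FL) (d0 d1 : SKBHom R X) :
  IsEquivRel (C:=SKBCat FL) d0 d1 ->
  exists (rho : SKBHom X R) (sg : SKBHom R R),
    [/\ `d0 <o `rho = idm (X : E), `d1 <o `rho = idm (X : E),
        `d0 <o `sg = `d1 & `d1 <o `sg = `d0].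
Proof.
case=> _ [[r [r0 r1]] [[s [s0 s1]] _]].
exists r, s; split.
- exact: (und r0).
- exact: (und r1).
- exact: (und s0).
- exact: (und s1).
Qed.

End Main.

Section Main2.
Variables (E : Category) (FL : FinLim E).
Local Notation mu m x y := (m <o pr FL x y).
Local Notation "` f" := (proj1_sig f) (at level 2).
Implicit Types (W : E).

Lemma huq_coop (Z X IR IS : SkewBrace FL) (HZ : IsZeroObj (C:=SKBCat FL) Z)
  (iR : SKBHom IR X) (iS : SKBHom IS X) :
  Cooperate (C:=SKBCat FL) Z iR iS ->
  forall W (i : Hom W IR) (j : Hom W IS) b b',
   mu (sop X b) (`iR <o i) (`iS <o j) = mu (sop X b') (`iR <o i) (`iS <o j) /\
   mu (sop X b) (`iR <o i) (`iS <o j) = mu (sop X b') (`iS <o j) (`iR <o i).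
Proof.
move=> [P [p1 [p2 [HP [phi [Hl Hk]]]]]] W i j b b'.
case: (HZ IR) => [[bZ' _] [aZ _]].
case: (HZ IS) => [[bZ _] [aZ' _]].
case: (HP _ (SKB_idm IR) (SKB_comp bZ aZ)) => l [[l1 l2] _].
case: (HP _ (SKB_comp bZ' aZ') (SKB_idm IS)) => k [[k1 k2] _].
have phl := Hl l l1 (ex_intro _ aZ (ex_intro _ bZ l2)).
have phk := Hk k (ex_intro _ aZ' (ex_intro _ bZ' k1)) k2.
have l1' : `p1 <o `l = idm (IR : E) := und l1.
have l2' : `p2 <o `l = `bZ <o `aZ := und l2.
have k1' : `p1 <o `k = `bZ' <o `aZ' := und k1.
have k2' : `p2 <o `k = idm (IS : E) := und k2.
have phl' : `phi <o `l = `iR := und phl.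
have phk' : `phi <o `k = `iS := und phk.
have el1 : `p1 <o (`l <o i) = i by rewrite comp_assoc l1' comp_idl.
have ek2 : `p2 <o (`k <o j) = j by rewrite comp_assoc k2' comp_idl.
have el2 : `p2 <o (`l <o i) = Defs.cst W (sb_unit IS).
  by rewrite comp_assoc l2' -comp_assoc (zero_elem HZ (`aZ <o i)) smorph1.
have ek1 : `p1 <o (`k <o j) = Defs.cst W (sb_unit IR).
  by rewrite comp_assoc k1' -comp_assoc (zero_elem HZ (`aZ' <o j)) smorph1.
pose hh c := mu (sop P c) (`l <o i) (`k <o j).
pose hh' c := mu (sop P c) (`k <o j) (`l <o i).
have Phh c : `phi <o hh c = mu (sop X c) (`iR <o i) (`iS <o j).
  by rewrite /hh smorph !comp_assoc phl' phk'.
have Phh' c : `phi <o hh' c = mu (sop X c) (`iS <o j) (`iR <o i).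
  by rewrite /hh' smorph !comp_assoc phl' phk'.
have Ehh c : hh c = hh true.
  apply: (prod_jm HP); rewrite /hh !smorph ?el1 ?ek1 ?el2 ?ek2.
    by rewrite (gx1 (sgrp _ c)) (gx1 (sgrp _ true)).
  by rewrite (g1x (sgrp _ c)) (g1x (sgrp _ true)).
have Ehh' c : hh' c = hh true.
  apply: (prod_jm HP); rewrite /hh /hh' !smorph ?el1 ?ek1 ?el2 ?ek2.
    by rewrite (g1x (sgrp _ c)) (gx1 (sgrp _ true)).
  by rewrite (gx1 (sgrp _ c)) (g1x (sgrp _ true)).
split.
  by rewrite -!Phh Ehh (Ehh b').
by rewrite -Phh -Phh' Ehh Ehh'.
Qed.


Lemma sbrace (X : SkewBrace FL) W (a b c : Hom W X) :
  mu (sop X false) a (mu (sop X true) b c)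
  = mu (sop X true) (mu (sop X true) (mu (sop X false) a b) (sinv X true <o a))
                    (mu (sop X false) a c).
Proof. exact: sb_brace. Qed.

Lemma brace_ident' (X : SkewBrace FL) W (u y v : Hom W X) :
  mu (sop X false) u v = mu (sop X true) u v ->
  mu (sop X true) (mu (sop X true) (mu (sop X false) u y) (sinv X true <o y)) (mu (sop X true) y v)
  = mu (sop X false) (mu (sop X false) (mu (sop X false) u y) (sinv X false <o y)) (mu (sop X true) y v).
Proof.
move=> H.
rewrite (gKr (sgrp X false)) sbrace H (gA (sgrp X true) _ (sinv X true <o u)).
rewrite (gKV (sgrp X true)).
by rewrite (gA (sgrp X true)) (gKV (sgrp X true)).
Qed.

Lemma brace_ident (X : SkewBrace FL) W (x0 y x2 : Hom W X) :
  mu (sop X false) (mu (sop X false) x0 (sinv X false <o y)) (mu (sop X true) (sinv X true <o y) x2)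
  = mu (sop X true) (mu (sop X false) x0 (sinv X false <o y)) (mu (sop X true) (sinv X true <o y) x2) ->
  mu (sop X true) (mu (sop X true) x0 (sinv X true <o y)) x2
  = mu (sop X false) (mu (sop X false) x0 (sinv X false <o y)) x2.
Proof.
move=> H; have := brace_ident' y H.
by rewrite (gKVr (sgrp X false)) (gK (sgrp X true)).
Qed.

End Main2.

Section Main3.
Variables (E : Category) (FL : FinLim E).
Local Notation mu m x y := (m <o pr FL x y).
Local Notation "` f" := (proj1_sig f) (at level 2).
Implicit Types (W : E).

Lemma HS (Z : SkewBrace FL) : IsZeroObj (C:=SKBCat FL) Z -> HuqSmith (C:=SKBCat FL) Z.
Proof.
move=> HZ X R S d0R d1R d0S d1S eqR eqS zX IR xR zR pbR IS xS zS pbS coop.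
case: (equiv_facts eqR) => rR [sR [r0R r1R s0R s1R]].
case: (equiv_facts eqS) => rS [sS [r0S r1S s0S s1S]].
have HQ : forall W (u v : Hom W X), inI d0R d1R u -> inI d0S d1S v -> forall b b',
   mu (sop X b) u v = mu (sop X b') u v /\ mu (sop X b) u v = mu (sop X b') v u.
  move=> W u v [t [t0 t1]] [t' [t0' t1']] b b'.
  have [i ei] := pb_fact pbR (t:=t) (s:=Defs.cst W (sb_unit Z)) (etrans t0 (esym (smorph1 _ _))).
  have [j ej] := pb_fact pbS (t:=t') (s:=Defs.cst W (sb_unit Z)) (etrans t0' (esym (smorph1 _ _))).
  have := huq_coop HZ coop i j b b' => /=.
  by rewrite -!comp_assoc ei ej t1 t1'.
move=> P a b [pc _].
have comm' : forall W (z : Hom W P), `d1R <o (`a <o z) = `d0S <o (`b <o z).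
  by move=> W z; rewrite !comp_assoc; have -> : `d1R <o `a = `d0S <o `b := und pc.
pose pE : Hom (P : E) X := mu (sop X true) (mu (sop X true) (`d0R <o `a)
                (sinv X true <o (`d1R <o `a))) (`d1S <o `b).
have pE_comp : forall W (z : Hom W P), pE <o z =
   mu (sop X true) (mu (sop X true) (`d0R <o (`a <o z)) (sinv X true <o (`d1R <o (`a <o z))))
      (`d1S <o (`b <o z)).
  by move=> W z; rewrite /pE !mu_comp -!comp_assoc.
have pEc : forall W (z : Hom W P), pE <o z =
   mu (sop X false) (mu (sop X false) (`d0R <o (`a <o z)) (sinv X false <o (`d1R <o (`a <o z))))
      (`d1S <o (`b <o z)).
  move=> W z; rewrite pE_comp; apply: brace_ident.
  have m2 := M2 r0S r1S true (`b <o z); rewrite -comm' in m2.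
  exact: (HQ _ _ _ (M1 r0R r1R s0R s1R false (`a <o z)) m2 false true).1.
have key : forall c W (x y : Hom W P),
    pE <o mu (sop P c) x y = mu (sop X c) (pE <o x) (pE <o y).
  case=> W x y.
    rewrite !pE_comp !smorph; apply: (gswap (sgrp X true)).
    have m2 := M2 r0S r1S true (`b <o x); rewrite -comm' in m2.
    exact: (HQ _ _ _ (M1 r0R r1R s0R s1R true (`a <o y)) m2 true true).2.
  rewrite !pEc !smorph; apply: (gswap (sgrp X false)).
  have m2 := M2 r0S r1S false (`b <o x); rewrite -comm' in m2.
  exact: (HQ _ _ _ (M1 r0R r1R s0R s1R false (`a <o y)) m2 false false).2.
have pEm : IsSKBMorph (X:=P) (Y:=X) pE.
  by split=> W x y; [exact: (key true) | exact: (key false)].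
exists (exist _ pE pEm); split.
  move=> r hb hr0 hr1; apply: SKBHom_eq => /=.
  have e0 : `d0R <o (`a <o `r) = `d0S := und hr0.
  have e1 : `d1R <o (`a <o `r) = `d0S := und hr1.
  have eb : `b <o `r = idm (S : E) := und hb.
  rewrite pE_comp e0 e1 eb comp_idr (gxV (sgrp X true)) (g1x (sgrp X true)) //.
move=> l ha hl0 hl1; apply: SKBHom_eq => /=.
have ea : `a <o `l = idm (R : E) := und ha.
have e1 : `d1S <o (`b <o `l) = `d1R := und hl1.
rewrite pE_comp ea e1 !comp_idr (gKVr (sgrp X true)) //.
Qed.

End Main3.

Theorem corollary3p11 :
  (forall (E : Category) (FL : FinLim E), SatisfiesHuqSmith (SKBCat FL)) /\
  (forall FL : FinLim TopCat, SatisfiesHuqSmith (SKBCat FL)).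
Proof.
have H : forall (E : Category) (FL : FinLim E), SatisfiesHuqSmith (SKBCat FL).
  move=> E FL; split; first by exists (T0 FL); exact: T0_zero.
  by move=> Z HZ; exact: HS.
by split; [exact: H | move=> FL; exact: H].
Qed.
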